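(* Let $f=0$ be a structurally nonsingular DAE in $x:\mathbb{R}\to\mathbb{R}^n$, let $(p,q)$ be an optimal solution to $(\mathrm{D}_f)$, let $J=J_f^{p,q}$ be the associated system Jacobian, and let $(U,V)$ be a pair of nonsingular constant matrices $U,V\in\mathbb{R}^{n\times n}$ with $\operatorname{trank}(UJV)<n$ such that $U$ is upper-triangular along $p$ and $V$ is upper-triangular along $q$. Define the DAE $f'=0$ in the new variable $y:\mathbb{R}\to\mathbb{R}^n$ by $f'(y,\dot y,\dots,t):=U(D_t)\,f\big(V(D_t)y,\,V(D_t)\dot y,\,\dots,\,V(D_t)y^{(k)},\,t\big)$, where $U(D_t)=\operatorname{diag}\{D_t^{-p_i}\}\,U\,\operatorname{diag}\{D_t^{p_i}\}$ and $V(D_t)=\operatorname{diag}\{D_t^{-q_i}\}\,V\,\operatorname{diag}\{D_t^{q_i}\}$. Then $\hat\delta_{f'}<\hat\delta_f$.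
   Context: A DAE is $f(x,\dot x,\dots,x^{(k)},t)=0$ with $f:\mathbb{R}^{n(k+1)+1}\to\mathbb{R}^n$ smooth. Its $\sigma$-function is $\sigma_f(i,j)=\max\{l\in\mathbb{Z}_{\ge0}:\partial f_i/\partial x_j^{(l)}\not\equiv0\}$ (with $\max\emptyset=-\infty$). $(\mathrm{D}_f)$ is the problem: minimize $\sum_j q_j-\sum_i p_i$ subject to $q_j-p_i\ge\sigma_f(i,j)$, $p_i,q_j\in\mathbb{Z}_{\ge0}$ for all $i,j\in[n]$; $\hat\delta_f$ is its optimal value ($-\infty$ if infeasible/unbounded), and $f=0$ is structurally nonsingular if $\hat\delta_f\neq-\infty$. For an optimal $(p,q)$, the system Jacobian is the functional matrix $J_f^{p,q}=\big(\partial f_i/\partial x_j^{(q_j-p_i)}\big)_{ij}$ (entries with $q_j-p_i$ not a valid derivative order are zero). The term-rank $\operatorname{trank}M$ is the maximum number of entries not identically zero with no two in a common row or column. A matrix $U$ is upper-triangular along an integer sequence $p$ if $U_{ij}=0$ whenever $p_i>p_j$. $D_t=\mathrm{d}/\mathrm{d}t$; by the triangularity assumptions all entries of $U(D_t),V(D_t)$ are polynomials in $D_t$, explicitly $(U(D_t)f)_i=\sum_k U_{ik}f_k^{(p_k-p_i)}$ and $(V(D_t)y^{(l)})_m=\sum_j V_{mj}y_j^{(q_j-q_m+l)}$. *)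

(* Defs.v *)
From HB Require Import structures.
From mathcomp Require Import all_boot all_order all_algebra.
From mathcomp Require Import all_classical all_reals all_analysis.
Set Implicit Arguments. Unset Strict Implicit. Unset Printing Implicit Defensive.
Import Order.TTheory GRing.Theory Num.Theory.
Import numFieldNormedType.Exports.
Local Open Scope ring_scope.
Local Open Scope classical_set_scope.

Fixpoint iterD {R : realType} {V W : normedModType R} (vs : seq V) (g : V -> W)
  : V -> W :=
  match vs with
  | [::] => g
  | v :: vs' => fun x => derive (iterD vs' g) x v
  end.

Definition smooth {R : realType} {V W : normedModType R} (g : V -> W) : Prop :=
  forall (vs : seq V) (x : V), differentiable (iterD vs g) x.

(* X l j stands for the variable x_j^{(l)} *)
Definition jet (R : realType) (n : nat) := nat -> 'I_n -> R.

(* the point (x, x', ..., x^{(k)}, t) of R^{n(k+1)+1} *)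
Definition jetpt {R : realType} {n : nat} (k : nat) (X : jet R n) (t : R)
  : 'rV[R]_(k.+1 * n + 1) :=
  row_mx (mxvec (\matrix_(l < k.+1, j < n) X (nat_of_ord l) j)) (\row_(_ < 1) t).

Definition daelift {R : realType} {n k : nat} (f : 'rV[R]_(k.+1 * n + 1) -> 'rV[R]_n)
  (X : jet R n) (t : R) (i : 'I_n) : R := f (jetpt k X t) ord0 i.

Definition jset {R : realType} {n : nat} (X : jet R n) (l : nat) (j : 'I_n) (s : R)
  : jet R n := fun l' j' => if (l' == l) && (j' == j) then s else X l' j'.

Definition pdx {R : realType} {n : nat} (g : jet R n -> R -> R) (l : nat) (j : 'I_n)
  (X : jet R n) (t : R) : R :=
  derive1 (fun s => g (jset X l j s) t) (X l j).

Definition pdt {R : realType} {n : nat} (g : jet R n -> R -> R) (X : jet R n) (t : R) : R :=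
  derive1 (fun s => g X s) t.

(* total time derivative D_t of a function depending on jets of order <= K *)
Definition Dt {R : realType} {n : nat} (K : nat) (g : jet R n -> R -> R)
  (X : jet R n) (t : R) : R :=
  \sum_(l < K.+1) \sum_(j < n) pdx g l j X t * X l.+1 j + pdt g X t.

Fixpoint Dtn {R : realType} {n : nat} (K m : nat) (g : jet R n -> R -> R)
  : jet R n -> R -> R :=
  match m with
  | 0 => g
  | m'.+1 => Dt (K + m') (Dtn K m' g)
  end.

(* sigma(i,j) = max {l | d g_i / d x_j^{(l)} not identically zero}, max {} = -oo *)
Definition sigma {R : realType} {n : nat} (g : jet R n -> R -> 'I_n -> R)
  (i j : 'I_n) : \bar R :=
  ereal_sup [set (l%:R)%:E | l in
     [set l : nat | exists (X : jet R n) (t : R), pdx (fun X t => g X t i) l j X t != 0]].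

Definition feasible {R : realType} {n : nat} (sg : 'I_n -> 'I_n -> \bar R)
  (p q : 'I_n -> nat) : Prop :=
  forall i j : 'I_n, (sg i j <= ((q j)%:R - (p i)%:R)%:E)%E.

Definition objective {R : realType} {n : nat} (p q : 'I_n -> nat) : R :=
  \sum_(j < n) (q j)%:R - \sum_(i < n) (p i)%:R.

(* optimal value of (D_g); -oo if infeasible or unbounded *)
Definition dhat {R : realType} {n : nat} (sg : 'I_n -> 'I_n -> \bar R) : \bar R :=
  if `[< exists p q, feasible sg p q >] then
    ereal_inf [set x | exists p q, feasible sg p q /\ x = (@objective R n p q)%:E]
  else -oo%E.

Definition optimal {R : realType} {n : nat} (sg : 'I_n -> 'I_n -> \bar R)
  (p q : 'I_n -> nat) : Prop :=
  feasible sg p q /\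
  forall p' q', feasible sg p' q' -> @objective R n p q <= @objective R n p' q'.

Definition sysJac {R : realType} {n k : nat} (f : 'rV[R]_(k.+1 * n + 1) -> 'rV[R]_n)
  (p q : 'I_n -> nat) (i j : 'I_n) : jet R n -> R -> R :=
  fun X t => if (p i <= q j)%N then pdx (fun X t => daelift f X t i) (q j - p i) j X t
             else 0.

Definition mulF {R : realType} {n : nat} (U : 'M[R]_n) (J : 'I_n -> 'I_n -> jet R n -> R -> R)
  (V : 'M[R]_n) (i j : 'I_n) : jet R n -> R -> R :=
  fun X t => \sum_(a < n) \sum_(b < n) U i a * J a b X t * V b j.

Definition partial_matching {n : nat} (S : {set 'I_n * 'I_n}) : bool :=
  [forall x in S, forall y in S, (x != y) ==> ((x.1 != y.1) && (x.2 != y.2))].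

Definition trank {R : realType} {n : nat} (M : 'I_n -> 'I_n -> jet R n -> R -> R) : nat :=
  \max_(S : {set 'I_n * 'I_n} | partial_matching S &&
        [forall x in S, `[< exists (X : jet R n) (t : R), M x.1 x.2 X t != 0 >]]) #|S|.

Definition upper_along {R : realType} {n : nat} (p : 'I_n -> nat) (U : 'M[R]_n) : Prop :=
  forall i j : 'I_n, (p j < p i)%N -> U i j = 0.

(* (V(D_t) y^{(l)})_m = sum_j V_mj y_j^{(q_j - q_m + l)} *)
Definition substV {R : realType} {n : nat} (q : 'I_n -> nat) (V : 'M[R]_n) (Y : jet R n)
  : jet R n :=
  fun l m => \sum_(j < n) V m j * Y (q j - q m + l)%N j.

(* f'(y, y', ..., t)_i = sum_a U_ia D_t^{p_a - p_i} [ f_a(V(D_t)y, V(D_t)y', ..., t) ];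
   the composed function has order <= k + max_j q_j *)
Definition fprime {R : realType} {n k : nat} (f : 'rV[R]_(k.+1 * n + 1) -> 'rV[R]_n)
  (p q : 'I_n -> nat) (U V : 'M[R]_n) : jet R n -> R -> 'I_n -> R :=
  fun Y t i => \sum_(a < n) U i a *
     Dtn (k + \max_(j < n) q j) (p a - p i) (fun Y t => daelift f (substV q V Y) t a) Y t.

(* Main.v *)
Require Import Defs.
From HB Require Import structures.
From mathcomp Require Import all_boot zify.
Set Implicit Arguments. Unset Strict Implicit. Unset Printing Implicit Defensive.

Section Hall.
Variable n : nat.
Local Notation I := ('I_n).

Definition nbr (T : I -> I -> bool) (A : {set I}) : {set I} :=
  [set j | [exists i in A, T i j]].

Lemma nbrU T A B : nbr T (A :|: B) = nbr T A :|: nbr T B.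
Proof.
apply/setP => j; rewrite !inE; apply/existsP/orP.
  by case=> i /andP[]; rewrite inE => /orP[] iA Tij; [left|right];
     apply/existsP; exists i; rewrite iA.
by case=> /existsP[i /andP[iA Tij]]; exists i; rewrite inE iA ?orbT Tij.
Qed.

Lemma hall_gen m : forall (A : {set I}) (T : I -> I -> bool), (#|A| <= m)%N ->
  (forall B : {set I}, B \subset A -> #|B| <= #|nbr T B|)%N ->
  exists g : I -> I, {in A &, injective g} /\ forall i, i \in A -> T i (g i).
Proof.
elim: m => [|m IH] A T.
  rewrite leqn0 cards_eq0 => /eqP -> _; exists id; split=> //.
  by move=> ?; rewrite inE.
move=> cA hc.
case: (boolP [exists B : {set I}, [&& B != set0, B \proper A & #|nbr T B| <= #|B|]]).
- case/existsP => B /and3P[B0 BA NB].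
  have cB : (#|B| <= m)%N.
    by have := proper_card BA; move: cA; clear; lia.
  have [g1 [ig1 Tg1]] := IH B T cB (fun C CB => hc C (subset_trans CB (proper_sub BA))).
  set T' := fun i j => T i j && (j \notin nbr T B).
  have cA' : (#|A :\: B| <= m)%N.
    rewrite cardsD (setIidPr (proper_sub BA)).
    have : (0 < #|B|)%N by rewrite card_gt0.
    move: cA; move: #|A| #|B| => a b; clear; lia.
  have hc' : forall C : {set I}, C \subset A :\: B -> (#|C| <= #|nbr T' C|)%N.
    move=> C CA.
    have dCB : C :&: B = set0.
      apply/setP => x; rewrite !inE; apply/negP => /andP[xC xB].
      by move/subsetP: CA => /(_ x xC); rewrite inE xB.
    have CBA : C :|: B \subset A.
      by rewrite subUset (proper_sub BA) andbT; apply: subset_trans CA (subsetDl _ _).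
    have h1 := hc _ CBA.
    rewrite nbrU cardsU dCB cards0 subn0 in h1.
    have -> : nbr T' C = nbr T C :\: nbr T B.
      apply/setP => j; rewrite [in RHS]inE [_ \in nbr T' C]inE [j \in nbr T C]inE; apply/existsP/andP.
        by case=> i /andP[iC /andP[Tij jN]]; split => //; apply/existsP; exists i; rewrite iC.
      by case=> jN /existsP[i /andP[iC Tij]]; exists i; rewrite iC /T' Tij.
    rewrite cardsD.
    have := leq_card_setU (nbr T C) (nbr T B).
    have := subset_leq_card (subsetIr (nbr T C) (nbr T B)).
    have := cardsU (nbr T C) (nbr T B).
    move: h1 NB; move: #|C| #|B| #|nbr T C| #|nbr T B| #|nbr T C :|: nbr T B| #|nbr T C :&: nbr T B|.
    clear; lia.
  have [g2 [ig2 Tg2]] := IH (A :\: B) T' cA' hc'.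
  exists (fun i => if i \in B then g1 i else g2 i); split.
    move=> x y xA yA /=.
    case: (boolP (x \in B)) => xB; case: (boolP (y \in B)) => yB.
    + exact: ig1.
    + move=> e; have : y \in A :\: B by rewrite inE yB yA.
      move/Tg2 => /andP[_]; rewrite -e.
      by have := Tg1 x xB => Tx; rewrite inE; case/negP; apply/existsP; exists x; rewrite xB.
    + move=> e; have : x \in A :\: B by rewrite inE xB xA.
      move/Tg2 => /andP[_]; rewrite e.
      by have := Tg1 y yB => Ty; rewrite inE; case/negP; apply/existsP; exists y; rewrite yB.
    + by apply: ig2; rewrite inE ?xB ?yB ?xA ?yA.
  move=> i iA; case: (boolP (i \in B)) => iB; first exact: Tg1.
  by have /Tg2/andP[] : i \in A :\: B by rewrite inE iB iA.
- move=> hno.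
  case: (set_0Vmem A) => [A0|[a aA]].
    by exists id; split => //; rewrite A0 => ?; rewrite inE.
  have : (0 < #|nbr T [set a]|)%N.
    by have := hc [set a]; rewrite sub1set cards1 => /(_ aA).
  rewrite card_gt0 => /set0Pn[b]; rewrite inE => /existsP[a' /andP[]].
  rewrite inE => /eqP -> Tab.
  set T' := fun i j => T i j && (j != b).
  have cA' : (#|A :\ a| <= m)%N.
    by move: cA; rewrite (cardsD1 a A) aA add1n ltnS.
  have hc' : forall C : {set I}, C \subset A :\ a -> (#|C| <= #|nbr T' C|)%N.
    move=> C CA.
    case: (set_0Vmem C) => [->|[c cC]]; first by rewrite cards0.
    have CpA : C \proper A.
      apply/properP; split; first by apply: subset_trans CA (subsetDl _ _).
      exists a => //; apply/negP => aC; move/subsetP: CA => /(_ a aC).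
      by rewrite !inE eqxx.
    have C0 : C != set0 by apply/set0Pn; exists c.
    have lt : (#|C| < #|nbr T C|)%N.
      rewrite ltnNge; apply/negP => le.
      by move/negP: hno; apply; apply/existsP; exists C; rewrite C0 CpA le.
    have sub : nbr T C :\ b \subset nbr T' C.
      apply/subsetP => j; rewrite !inE => /andP[jb /existsP[i /andP[iC Tij]]].
      by apply/existsP; exists i; rewrite iC /T' Tij jb.
    have := subset_leq_card sub.
    have := cardsD1 b (nbr T C).
    move: lt; move: #|C| #|nbr T C| #|nbr T C :\ b| #|nbr T' C| (b \in nbr T C).
    by clear => x y z w [|]; rewrite /= ?add1n ?add0n; lia.
  have [g2 [ig2 Tg2]] := IH (A :\ a) T' cA' hc'.
  exists (fun i => if i == a then b else g2 i); split.
    move=> x y xA yA /=.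
    case: eqP => xa; case: eqP => ya.
    + by rewrite xa ya.
    + move=> e; have : y \in A :\ a by rewrite !inE yA andbT; apply/eqP.
      by move/Tg2 => /andP[_]; rewrite -e eqxx.
    + move=> e; have : x \in A :\ a by rewrite !inE xA andbT; apply/eqP.
      by move/Tg2 => /andP[_]; rewrite e eqxx.
    + by apply: ig2; rewrite !inE ?xA ?yA andbT; apply/eqP.
  move=> i iA; case: eqP => [->//|ia].
  by have /Tg2/andP[] : i \in A :\ a by rewrite !inE iA andbT; apply/eqP.
Qed.

End Hall.

From mathcomp Require Import all_order all_algebra.
From mathcomp Require Import all_classical all_reals all_analysis.
From mathcomp Require Import zify ring lra.
Import Order.TTheory GRing.Theory Num.Theory.
Import numFieldNormedType.Exports.
Local Open Scope ring_scope.

Section A.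
Variable R : realType.

Lemma line_eq N (F : 'rV[R]_N -> R) (P v : 'rV[R]_N) (s : R) :
  (fun h : R => h^-1 *: (((fun s : R => F (P + s *: v)) \o shift s) (h *: 1) - F (P + s *: v))) =
  (fun h : R => h^-1 *: ((F \o shift (P + s *: v)) (h *: v) - F (P + s *: v))).
Proof.
apply/funext => h /=; congr (_ *: (F _ - _)).
by rewrite [h%:A]mulr1 scalerDl addrCA.
Qed.

Lemma derivable_line N (F : 'rV[R]_N -> R) (P v : 'rV[R]_N) (s : R) :
  derivable F (P + s *: v) v -> derivable (fun s : R => F (P + s *: v)) s 1.
Proof. by rewrite /derivable line_eq. Qed.

Lemma derive1_line N (F : 'rV[R]_N -> R) (P v : 'rV[R]_N) (s : R) :
  derive1 (fun s : R => F (P + s *: v)) s = 'D_v F (P + s *: v).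
Proof. by rewrite derive1E /derive line_eq. Qed.

Lemma aff_eq (a b : R) : (fun s : R => a * s + b) = (a \*: (@id R)) + cst b.
Proof. by apply/funext => s. Qed.

Lemma derivable_aff (a b x : R) : derivable (fun s => a * s + b) x 1.
Proof.
rewrite aff_eq; apply: derivableD; last exact: derivable_cst.
by apply: derivableZ; exact: derivable_id.
Qed.

Lemma derive1_aff (a b x : R) : derive1 (fun s => a * s + b) x = a.
Proof.
have dZ : derivable (a \*: (@id R)) x 1.
  by apply: derivableZ; exact: derivable_id.
rewrite derive1E aff_eq deriveD // deriveZ //.
by rewrite derive_id derive_cst addr0 /GRing.scale /= mulr1.
Qed.


Variable n : nat.
Implicit Types (X Y : jet R n).

Definition dep (g : jet R n -> R -> R) (D : nat -> 'I_n -> bool) :=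
  forall X X' t, (forall l j, D l j -> X l j = X' l j) -> g X t = g X' t.

Lemma jset_id X l j : jset X l j (X l j) = X.
Proof.
apply/funext => l'; apply/funext => j'; rewrite /jset.
by case: eqP => // ->; case: eqP => // ->.
Qed.

Lemma jset_jset X l j s s' : jset (jset X l j s) l j s' = jset X l j s'.
Proof.
apply/funext => l'; apply/funext => j'; rewrite /jset.
by case: eqP => //; case: eqP.
Qed.

Lemma pdx_jset (g : jet R n -> R -> R) l j X t s :
  pdx g l j (jset X l j s) t = derive1 (fun s' => g (jset X l j s') t) s.
Proof.
rewrite /pdx.
have -> : jset X l j s l j = s by rewrite /jset !eqxx.
by congr derive1; apply/funext => s'; rewrite jset_jset.
Qed.

Lemma dep_mono g (D D' : nat -> 'I_n -> bool) :
  (forall l j, D l j -> D' l j) -> dep g D -> dep g D'.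
Proof. by move=> DD' dg X X' t h; apply: dg => l j /DD'; apply: h. Qed.

Lemma jset_agree (D : nat -> 'I_n -> bool) X l j s :
  ~~ D l j -> forall l' j', D l' j' -> jset X l j s l' j' = X l' j'.
Proof.
move=> nD l' j' D'; rewrite /jset; case: eqP => // el; case: eqP => //= ej.
by move: nD; rewrite -el -ej D'.
Qed.

Lemma pdx_out g D l j X t : dep g D -> ~~ D l j -> pdx g l j X t = 0.
Proof.
move=> dg nD; rewrite /pdx.
have -> : (fun s => g (jset X l j s) t) = cst (g X t).
  by apply/funext => s; apply: dg; exact: jset_agree.
exact: derive1_cst.
Qed.

Lemma dep_pdx g D l j : dep g D -> dep (pdx g l j) D.
Proof.
move=> dg X X' t h.
case: (boolP (D l j)) => Dlj; last by rewrite !(pdx_out _ _ dg Dlj).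
rewrite /pdx (h _ _ Dlj); congr derive1; apply/funext => s; apply: dg => l' j' D'.
rewrite /jset; case: ifP => // _; exact: h.
Qed.

Lemma dep_pdt g D : dep g D -> dep (pdt g) D.
Proof.
move=> dg X X' t h; rewrite /pdt; congr derive1; apply/funext => s; exact: dg.
Qed.

Definition Dc (q : 'I_n -> nat) (c : nat) := fun (l : nat) (j : 'I_n) => (l + c <= q j)%N.

Lemma dep_Dt q c K g : dep g (Dc q c.+1) -> dep (Dt K g) (Dc q c).
Proof.
move=> dg X X' t h; rewrite /Dt.
have h1 : forall l j, Dc q c.+1 l j -> X l j = X' l j.
  by move=> l j; rewrite /Dc => H; apply: h; rewrite /Dc; lia.
congr (_ + _); last exact: (dep_pdt dg _ h1).
apply: eq_bigr => l _; apply: eq_bigr => j _.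
case: (boolP (Dc q c.+1 l j)) => D.
  rewrite (dep_pdx _ _ dg _ h1); congr (_ * _); apply: h.
  by move: D; rewrite /Dc; lia.
by rewrite !(pdx_out _ _ dg D) !mul0r.
Qed.

Lemma sum_sel (A : nat -> 'I_n -> R) K l0 j :
  \sum_(l < K.+1) \sum_(j' < n) A l j' * ((l.+1 == l0) && (j' == j))%:R =
  if (0 < l0 <= K.+1)%N then A l0.-1 j else 0.
Proof.
have E : forall l : 'I_K.+1, \sum_(j' < n) A l j' * ((l.+1 == l0) && (j' == j))%:R
      = (l.+1 == l0)%:R * A l j.
  move=> l; rewrite (bigD1 j) //= big1 => [|j' nj].
    by rewrite eqxx andbT addr0 mulrC.
  by rewrite (negbTE nj) andbF mulr0.
rewrite (eq_bigr _ (fun l _ => E l)) {E}.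
case: l0 => [|m] /=.
  by rewrite big1 // => l _; rewrite mul0r.
case: (ltnP m K.+1) => mK.
  rewrite (bigD1 (Ordinal mK)) //= eqxx mul1r big1 ?addr0 // => l nl.
  have -> : (l.+1 == m.+1) = false.
    by apply/negbTE; apply: contra nl => /eqP [] e; apply/eqP/val_inj.
  by rewrite mul0r.
rewrite big1 // => l _.
have -> : (l.+1 == m.+1) = false by apply/negbTE; have := ltn_ord l; lia.
by rewrite mul0r.
Qed.

Lemma Dt_top q c K g l0 j X t : dep g (Dc q c) -> ~~ Dc q c l0 j ->
  exists b, forall s, Dt K g (jset X l0 j s) t =
    (if (0 < l0 <= K.+1)%N then pdx g l0.-1 j X t else 0) * s + b.
Proof.
move=> dg nD.
have ag : forall s l j', Dc q c l j' -> jset X l0 j s l j' = X l j'.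
  by move=> s; exact: jset_agree.
exists (\sum_(l < K.+1) \sum_(j' < n) pdx g l j' X t *
          (if (l.+1 == l0) && (j' == j) then 0 else X l.+1 j') + pdt g X t).
move=> s; rewrite -(sum_sel (fun l j' => pdx g l j' X t)) /Dt.
rewrite (dep_pdt dg _ (ag s)) addrA; congr (_ + _).
rewrite mulr_suml -big_split /=; apply: eq_bigr => l _.
rewrite mulr_suml -big_split /=; apply: eq_bigr => j' _.
rewrite (dep_pdx _ _ dg _ (ag s)) /jset.
by case: ifP => _ /=; ring.
Qed.

End A.

Section A2.
Variable R : realType.
Variable n : nat.
Implicit Types (X Y : jet R n) (q : 'I_n -> nat) (g : jet R n -> R -> R) (j : 'I_n).

Lemma aff_fun (h : R -> R) (a b : R) : (forall s, h s = a * s + b) ->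
  h = (fun s => a * s + b).
Proof. by move=> e; apply/funext => s; rewrite e. Qed.

Lemma Dt_top_pdx q c K g l0 j X t : dep g (Dc q c) -> ~~ Dc q c l0 j ->
  pdx (Dt K g) l0 j X t = if (0 < l0 <= K.+1)%N then pdx g l0.-1 j X t else 0.
Proof.
move=> dg nD; have [b hb] := Dt_top K X t dg nD.
by rewrite /pdx (aff_fun hb) derive1_aff.
Qed.

Lemma Dt_top_derivable q c K g l0 j X t x : dep g (Dc q c) -> ~~ Dc q c l0 j ->
  derivable (fun s => Dt K g (jset X l0 j s) t) x 1.
Proof.
move=> dg nD; have [b hb] := Dt_top K X t dg nD.
by rewrite (aff_fun hb); exact: derivable_aff.
Qed.

Lemma dep_Dtn q K m c g : dep g (Dc q c) -> (m <= c)%N -> dep (Dtn K m g) (Dc q (c - m)).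
Proof.
move=> dg; elim: m => [|m IH] mc; first by rewrite subn0.
have := IH (ltnW mc); have -> : (c - m = (c - m.+1).+1)%N by lia.
exact: dep_Dt.
Qed.

Lemma Dtn_top q K m c g j X t : dep g (Dc q c) -> (m <= c)%N -> (c - m <= q j)%N ->
  (q j <= K)%N ->
  pdx (Dtn K m g) (q j - (c - m)) j X t = if (c <= q j)%N then pdx g (q j - c) j X t else 0.
Proof.
move=> dg; elim: m => [|m IH] mc cq qK.
  by rewrite subn0 in cq *; rewrite /= ifT.
rewrite /=.
have dm := dep_Dtn K dg (ltnW mc).
rewrite (Dt_top_pdx _ _ _ dm); last by rewrite /Dc; lia.
case: (leqP (c - m) (q j)) => h.
  rewrite ifT; last by lia.
  have -> : ((q j - (c - m.+1)).-1 = q j - (c - m))%N by lia.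
  by apply: IH => //; lia.
rewrite ifF; last by lia.
by rewrite ifF //; lia.
Qed.

End A2.

Section A3.
Variable R : realType.
Variables n k : nat.
Implicit Types (X Y W : jet R n) (q : 'I_n -> nat) (g : jet R n -> R -> R) (j : 'I_n).

Definition delta (l : nat) j : jet R n := fun l' j' => ((l' == l) && (j' == j))%:R.
Definition jl W := jetpt k W 0.

Lemma jetpt_aff X W (s t : R) :
  jetpt k (fun l j => X l j + s * W l j) t = jetpt k X t + s *: jl W.
Proof.
rewrite /jl /jetpt scale_row_mx add_row_mx; congr row_mx.
  rewrite -linearZ -linearD; congr mxvec; apply/matrixP => i j; rewrite !mxE //.
by apply/rowP => i; rewrite !mxE mulr0 addr0.
Qed.

Lemma jetpt_agree X X' t : (forall l j, (l <= k)%N -> X l j = X' l j) ->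
  jetpt k X t = jetpt k X' t.
Proof.
move=> h; rewrite /jetpt; congr row_mx; congr mxvec; apply/matrixP => i j.
by rewrite !mxE h // -ltnS ltn_ord.
Qed.

Lemma jset_aff X l j s :
  jset X l j s = (fun l' j' => jset X l j 0 l' j' + s * delta l j l' j').
Proof.
apply/funext => l'; apply/funext => j'; rewrite /jset /delta.
by case: ((l' == l) && (j' == j)) => /=; rewrite ?mulr1 ?mulr0 ?addr0 ?add0r.
Qed.

Lemma jl0 : jl (fun _ _ => 0) = 0.
Proof.
rewrite /jl /jetpt.
have -> : (\matrix_(l < k.+1, j < n) (fun (_ : nat) (_ : 'I_n) => (0:R)) l j) = 0.
  by apply/matrixP => i j; rewrite !mxE.
have -> : (\row_(_ < 1) (0:R)) = 0 by apply/rowP => i; rewrite !mxE.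
by rewrite linear0 row_mx0.
Qed.

Lemma jl_sum_seq (I : Type) (r : seq I) (c : I -> R) (Wf : I -> jet R n) :
  jl (fun l j => \sum_(i <- r) c i * Wf i l j) = \sum_(i <- r) c i *: jl (Wf i).
Proof.
elim: r => [|i r IH].
  rewrite big_nil.
  have -> : (fun (l : nat) (j : 'I_n) => \sum_(i <- [::]) c i * Wf i l j) = (fun _ _ => 0).
    by apply/funext => ?; apply/funext => ?; rewrite big_nil.
  exact: jl0.
rewrite big_cons -IH addrC -jetpt_aff /jl; congr jetpt.
by apply/funext => l; apply/funext => j; rewrite big_cons addrC.
Qed.

Lemma jl_sum (I : finType) (c : I -> R) (Wf : I -> jet R n) :
  jl (fun l j => \sum_i c i * Wf i l j) = \sum_i c i *: jl (Wf i).
Proof. exact: jl_sum_seq. Qed.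

Variable f : 'rV[R]_(k.+1 * n + 1) -> 'rV[R]_n.
Hypothesis df : forall x, differentiable f x.

Definition Fa (a : 'I_n) := fun x : 'rV[R]_(k.+1 * n + 1) => f x ord0 a.

Lemma dFa a x : differentiable (Fa a) x.
Proof.
have -> : Fa a = (fun N : 'M[R]_(1, n) => N ord0 a) \o f by [].
apply: differentiable_comp; first exact: df.
exact: differentiable_coord.
Qed.

Lemma dae_line a X l j t :
  (fun s => daelift f (jset X l j s) t a) =
  (fun s => Fa a (jetpt k (jset X l j 0) t + s *: jl (delta l j))).
Proof. by apply/funext => s; rewrite /daelift -jetpt_aff -jset_aff. Qed.

Lemma pdx_dae a X l j t :
  pdx (fun X t => daelift f X t a) l j X t = 'd (Fa a) (jetpt k X t) (jl (delta l j)).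
Proof.
rewrite /pdx dae_line derive1_line deriveE; last exact: dFa.
by rewrite -jetpt_aff -jset_aff jset_id.
Qed.

Lemma derivable_dae a X l j t x :
  derivable (fun s => daelift f (jset X l j s) t a) x 1.
Proof.
rewrite dae_line; apply: derivable_line; exact/diff_derivable/dFa.
Qed.

Lemma const_of_d0 (phi : R -> R) : (forall x, derivable phi x 1) ->
  (forall x, derive1 phi x = 0) -> forall a b, phi a = phi b.
Proof.
move=> dp d0.
have key : forall a b, a <= b -> phi a = phi b.
  move=> a b ab.
  have [c _ ] := @MVT_segment R phi (fun _ => 0) a b ab
    (fun x _ => DeriveDef (dp x) (etrans (esym (derive1E phi x)) (d0 x)))
    (continuous_subspaceT (fun x =>
        differentiable_continuous (proj1 (derivable1_diffP phi x) (dp x)))).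
  by rewrite mul0r => /eqP; rewrite subr_eq0 => /eqP.
move=> a b; case: (lerP a b) => ab; first exact: key.
by apply/esym/key/ltW.
Qed.

Lemma ign_dae a m b : (forall X t, pdx (fun X t => daelift f X t a) m b X t = 0) ->
  forall X t s, daelift f (jset X m b s) t a = daelift f X t a.
Proof.
move=> h X t s.
have d0 : forall x, derive1 (fun s => daelift f (jset X m b s) t a) x = 0.
  move=> x; have := pdx_jset (fun X t => daelift f X t a) m b X t x.
  by rewrite h => e; exact: (esym e).
have := @const_of_d0 (fun s => daelift f (jset X m b s) t a)
   (fun x => @derivable_dae a X m b t x) d0 s (X m b).
by rewrite /= jset_id.
Qed.

End A3.

Section A4.
Variable R : realType.
Variables n k : nat.
Implicit Types (X Y W : jet R n) (q : 'I_n -> nat) (g : jet R n -> R -> R) (j : 'I_n).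
Variable f : 'rV[R]_(k.+1 * n + 1) -> 'rV[R]_n.
Hypothesis df : forall x, differentiable f x.

Lemma dep_dae a (D : nat -> 'I_n -> bool) :
  (forall m b, ~~ D m b -> (m <= k)%N -> forall X t s,
      daelift f (jset X m b s) t a = daelift f X t a) ->
  dep (fun X t => daelift f X t a) D.
Proof.
move=> ign X X' t agree.
pose mix (s : seq (nat * 'I_n)) : jet R n :=
  fun l j => if (l, j) \in s then X l j else X' l j.
have claim : forall s, all (fun c => (c.1 <= k)%N) s ->
    daelift f (mix s) t a = daelift f X' t a.
  elim=> [|[c1 c2] s IH] /=.
    by move=> _; congr daelift; apply/funext => l; apply/funext => j; rewrite /mix in_nil.
  case/andP => c1k alls.
  case: (boolP ((c1, c2) \in s)) => cs.
    rewrite -IH //; congr daelift; apply/funext => l; apply/funext => j.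
    rewrite /mix in_cons; case: eqP => // -[-> ->]; by rewrite cs.
  have -> : mix ((c1, c2) :: s) = jset (mix s) c1 c2 (X c1 c2).
    apply/funext => l; apply/funext => j; rewrite /mix /jset in_cons xpair_eqE.
    rewrite /mix.
    by case: (boolP ((l == c1) && (j == c2))) => [/andP[/eqP -> /eqP ->]|] /=; rewrite ?cs.
  case: (boolP (D c1 c2)) => Dc.
    have -> : X c1 c2 = mix s c1 c2 by rewrite /mix (negbTE cs) agree.
    by rewrite jset_id IH.
  by rewrite ign // IH.
pose cs := [seq (l, j) | l <- iota 0 k.+1, j <- enum 'I_n].
have -> : daelift f X t a = daelift f (mix cs) t a.
  rewrite /daelift (@jetpt_agree R n k X (mix cs)) // => l j lk.
  rewrite /mix ifT //; apply: allpairs_f; last by rewrite mem_enum.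
  by rewrite mem_iota add0n ltnS lk.
apply: claim; apply/allP => -[l j] /allpairsP [[l' j'] /= [li _ [-> _]]].
by move: li; rewrite -/(iota 0 k.+1) mem_iota add0n ltnS.
Qed.

Lemma dep_subst (G : jet R n -> R -> R) q (V : 'M[R]_n) c :
  upper_along q V -> dep G (Dc q c) -> dep (fun Y t => G (substV q V Y) t) (Dc q c).
Proof.
move=> uV dG Y Y' t h; apply: dG => m b Dmb; rewrite /substV.
apply: eq_bigr => j _.
case: (ltnP (q j) (q b)) => qjb; first by rewrite uV // !mul0r.
congr (_ * _); apply: h; move: Dmb; rewrite /Dc; lia.
Qed.

Lemma substV_aff q (V : 'M[R]_n) Y W s :
  substV q V (fun l j => Y l j + s * W l j) =
  (fun l m => substV q V Y l m + s * substV q V W l m).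
Proof.
apply/funext => l; apply/funext => m; rewrite /substV mulr_sumr -big_split.
by apply: eq_bigr => j _ /=; ring.
Qed.

Lemma g_line q (V : 'M[R]_n) a Y l j t :
  (fun s => daelift f (substV q V (jset Y l j s)) t a) =
  (fun s => Fa f a (jetpt k (substV q V (jset Y l j 0)) t + s *: jl k (substV q V (delta R l j)))).
Proof.
by apply/funext => s; rewrite /daelift -jetpt_aff -substV_aff -jset_aff.
Qed.

Lemma pdx_g q (V : 'M[R]_n) a l j Y t :
  pdx (fun Y t => daelift f (substV q V Y) t a) l j Y t =
  'd (Fa f a) (jetpt k (substV q V Y) t) (jl k (substV q V (delta R l j))).
Proof.
rewrite /pdx g_line derive1_line deriveE; last exact: dFa.
by rewrite -jetpt_aff -substV_aff -jset_aff jset_id.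
Qed.

Lemma derivable_g q (V : 'M[R]_n) a Y l j t x :
  derivable (fun s => daelift f (substV q V (jset Y l j s)) t a) x 1.
Proof.
rewrite g_line; apply: derivable_line; exact/diff_derivable/dFa.
Qed.

Lemma chain_sum (p q : 'I_n -> nat) (V : 'M[R]_n) a j X t :
  upper_along q V -> (p a <= q j)%N ->
  'd (Fa f a) (jetpt k X t) (jl k (substV q V (delta R (q j - p a) j))) =
  \sum_b V b j * sysJac f p q a b X t.
Proof.
move=> uV paj.
pose Wf (b' : 'I_n) : jet R n :=
  if (p a <= q b')%N then delta R (q b' - p a) b' else (fun _ _ => 0).
have E : substV q V (delta R (q j - p a) j) = (fun m b => \sum_b' V b' j * Wf b' m b).
  apply/funext => m; apply/funext => b; rewrite /substV.
  rewrite (bigD1 j) //= big1 => [|j' nj]; last first.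
    by rewrite /delta (negbTE nj) andbF mulr0.
  rewrite (bigD1 b) //= big1 => [|b' nb]; last first.
    rewrite /Wf; case: ifP => _; last by rewrite mulr0.
    by rewrite /delta [b == b']eq_sym (negbTE nb) andbF mulr0.
  rewrite !addr0.
  case: (ltnP (q j) (q b)) => qjb; first by rewrite uV // !mul0r.
  congr (_ * _); rewrite /Wf /delta eqxx !andbT.
  case: ifP => pb.
    rewrite eqxx andbT; congr (nat_of_bool _)%:R; apply/eqP/eqP => H; lia.
  have -> : (q j - q b + m == q j - p a)%N = false.
    by apply/negbTE/eqP; move: pb => /negbT; lia.
  by [].
rewrite E jl_sum linear_sum; apply: eq_bigr => b _.
rewrite linearZ /= /sysJac /Wf; case: ifP => pb.
  by rewrite (pdx_dae df).
by rewrite jl0 linear0 scaler0 mulr0.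
Qed.


End A4.

Unset Implicit Arguments. Set Strict Implicit.

Lemma derive1_lin (R : realType) m (c : 'I_m -> R) (phi : 'I_m -> R -> R) x :
  (forall i, c i != 0 -> derivable (phi i) x 1) ->
  derive1 (fun s => \sum_i c i * phi i s) x = \sum_i c i * derive1 (phi i) x.
Proof.
move=> dphi.
pose psi i : R -> R := if c i == 0 then cst 0 else phi i.
have dpsi : forall i, derivable (psi i) x 1.
  move=> i; rewrite /psi; case: eqP => [_|/eqP ci]; first exact: derivable_cst.
  exact: dphi.
have -> : (fun s => \sum_i c i * phi i s) = \sum_i (c i \*: psi i).
  apply/funext => s; rewrite fct_sumE; apply: eq_bigr => i _.
  by rewrite /psi /=; case: eqP => [->|_]; rewrite ?mul0r ?scale0r.
rewrite derive1E derive_sum => [|i]; last exact: derivableZ.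
apply: eq_bigr => i _; rewrite deriveZ // /psi.
by case: eqP => [->|_]; rewrite ?scale0r ?mul0r // -derive1E.
Qed.

Section A5.
Variable R : realType.
Variables n k : nat.
Variable f : 'rV[R]_(k.+1 * n + 1) -> 'rV[R]_n.
Variables (p q : 'I_n -> nat) (U V : 'M[R]_n).
Hypothesis df : forall x, differentiable f x.
Hypothesis feas : feasible (sigma (daelift f)) p q.
Hypothesis uU : upper_along p U.
Hypothesis uV : upper_along q V.

Local Notation K := (k + \max_(j < n) q j)%N.
Definition ga (a : 'I_n) := fun (Y : jet R n) t => daelift f (substV q V Y) t a.
Definition fp (i : 'I_n) := fun (Y : jet R n) t => fprime f p q U V Y t i.

Lemma ign_f a m b : (q b < m + p a)%N ->
  forall X t s, daelift f (jset X m b s) t a = daelift f X t a.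
Proof.
move=> lt; apply: (ign_dae df) => X t; apply/eqP/negP => /negP nz.
have := feas a b; apply/negP; rewrite -ltNge.
apply: (@lt_le_trans _ _ (m%:R)%:E); last first.
  apply: ereal_sup_ubound; exists m => //; exists X; exists t; exact: nz.
rewrite lte_fin ltrBlDr -natrD ltr_nat; lia.
Qed.

Lemma dep_fa a : dep (fun X t => daelift f X t a) (Dc q (p a)).
Proof.
apply: dep_dae => m b nD mk; apply: ign_f; move: nD; rewrite /Dc; lia.
Qed.

Lemma dep_ga a : dep (ga a) (Dc q (p a)).
Proof. exact: (dep_subst uV (dep_fa a)). Qed.

Lemma qK j : (q j <= K)%N.
Proof. by apply: leq_trans (leq_addl _ _); exact: (leq_bigmax j). Qed.

Lemma dep_fp i : dep (fp i) (Dc q (p i)).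
Proof.
move=> X X' t h; rewrite /fp /fprime; apply: eq_bigr => a _.
case: (ltnP (p a) (p i)) => pai; first by rewrite uU // !mul0r.
congr (_ * _).
have := dep_Dtn K (dep_ga a) (leq_subr (p i) (p a)).
by rewrite subKn // => /(_ X X' t h).
Qed.

Lemma fp_top i j Y t : (p i <= q j)%N ->
  pdx (fp i) (q j - p i) j Y t = mulF U (sysJac f p q) V i j (substV q V Y) t.
Proof.
move=> pij.
rewrite /pdx /fp /fprime derive1_lin => [|a Ua].
  rewrite /mulF; apply: eq_bigr => a _.
  have -> : derive1 (fun s => Dtn K (p a - p i)%N
        (fun Y t => daelift f (substV q V Y) t a) (jset Y (q j - p i)%N j s) t) (Y (q j - p i)%N j)
      = pdx (Dtn K (p a - p i)%N (ga a)) (q j - p i)%N j Y t by [].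
  case: (ltnP (p a) (p i)) => pai; first by rewrite uU // !mul0r big1 // => b _; rewrite !mul0r.
  have := @Dtn_top R n q K (p a - p i)%N (p a) (ga a) j Y t (dep_ga a) (leq_subr (p i) (p a)).
  rewrite subKn // => /(_ pij (qK j)) ->.
  case: ifP => paj.
    rewrite /ga (pdx_g df) (chain_sum df _ _ uV paj) mulr_sumr.
    by apply: eq_bigr => b _; ring.
  rewrite mulr0 big1 // => b _.
  case: (ltnP (q j) (q b)) => qjb; first by rewrite (uV _ _ qjb) !mulr0.
  rewrite /sysJac ifF /=; [by ring | by move/negbT: paj; lia].
case: (ltnP (p a) (p i)) => pai; first by move: Ua; rewrite uU ?eqxx.
case: (eqVneq (p a) (p i)) => pe.
  rewrite pe subnn /=.
  exact: (derivable_g df).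
have -> : (p a - p i = (p a - p i).-1.+1)%N by lia.
rewrite /=.
apply: (Dt_top_derivable (q := q) (c := (p a - (p a - p i).-1))).
  apply: (dep_Dtn K (@dep_ga a)); lia.
rewrite /Dc; lia.
Qed.

End A5.

Theorem theorem4 (R : realType) (n k : nat)
  (f : 'rV[R]_(k.+1 * n + 1) -> 'rV[R]_n) (p q : 'I_n -> nat) (U V : 'M[R]_n) :
  smooth f ->
  dhat (sigma (daelift f)) != -oo%E ->
  optimal (sigma (daelift f)) p q ->
  U \in unitmx -> V \in unitmx ->
  upper_along p U -> upper_along q V ->
  (trank (mulF U (sysJac f p q) V) < n)%N ->
  (dhat (sigma (fprime f p q U V)) < dhat (sigma (daelift f)))%E.
Proof.
move=> sm _ [feas opt] _ _ uU uV tr.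
have df : forall x, differentiable f x := fun x => sm [::] x.
pose T := fun i j : 'I_n => (p i <= q j)%N &&
   `[< exists Y t, pdx (fp R n k f p q U V i) (q j - p i)%N j Y t != 0 >].
case: (boolP [forall A : {set 'I_n}, #|A| <= #|nbr T A|]%N) => hall.
  exfalso.
  have cT : (#|[set: 'I_n]| <= n)%N by rewrite cardsT card_ord.
  have [g [ig Tg]] := @hall_gen n n _ T cT (fun B _ => (forallP hall) B).
  have : (n <= trank (mulF U (sysJac f p q) V))%N.
    pose S0 := [set (i, g i) | i : 'I_n].
    have cS : #|S0| = n.
      rewrite card_imset ?cardsT ?card_ord // => x y /= [] //.
    rewrite -{1}cS; apply: leq_bigmax_cond; apply/andP; split.
      apply/forall_inP => x /imsetP [i _ ->]; apply/forall_inP => y /imsetP [i' _ ->].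
      apply/implyP => ne /=.
      have nii : i != i' by apply: contra ne => /eqP ->.
      rewrite nii /=; apply: contra nii => /eqP e; apply/eqP.
      by apply: ig e; rewrite !inE.
    apply/forall_inP => x /imsetP [i _ ->] /=; apply/asboolP.
    have /andP [pig /asboolP [Y [t nz]]] : T i (g i) by apply: Tg; rewrite !inE.
    exists (substV q V Y), t.
    by rewrite -(fp_top R n k f p q U V df feas uU uV i (g i) Y t pig).
  by rewrite leqNgt tr.
move/forallPn: hall => [A]; rewrite -ltnNge => hA.
set N := nbr T A.
pose p' i := (p i + (i \in A))%N.
pose q' j := (q j + (j \in N))%N.
have feas' : feasible (sigma (fprime f p q U V)) p' q'.
  move=> i j; apply: ge_ereal_sup => _ [l [Y [t nz]] <-].
  have Dl : (l + p i <= q j)%N.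
    have := dep_fp R n k f p q U V df feas uU uV i.
    move=> dg; case: (boolP (Dc q (p i) l j)) => // nD.
    have e := pdx_out (g := fp R n k f p q U V i) Y t dg nD.
    by move/eqP: nz; case; exact: e.
  have key : (l + p' i <= q' j)%N.
    rewrite /p' /q'; case iA: (i \in A); case jN: (j \in N) => /=; try lia.
    have : (l + p i != q j)%N.
      apply/eqP => e; move/negbT: jN; rewrite /N inE; apply/negP/negPn.
      apply/existsP; exists i; rewrite iA /T /=.
      have -> : (q j - p i = l)%N by lia.
      rewrite (_ : (p i <= q j)%N = true) /=; last by apply/idP; lia.
      by apply/asboolP; exists Y, t.
    lia.
  by rewrite lee_fin lerBrDr -natrD ler_nat.
have sN : forall (B : {set 'I_n}), \sum_(j < n) ((j \in B) : nat)%:R = #|B|%:R :> R.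
  move=> B; rewrite -natr_sum -sum1_card big_mkcond /=; congr (_ %:R).
  by rewrite [RHS]big_mkcond /=; apply: eq_bigr => j _; case: (j \in B).
have obj_lt : @objective R n p' q' < @objective R n p q.
  rewrite /objective /p' /q'.
  under eq_bigr => j _ do rewrite natrD.
  under [X in _ - X]eq_bigr => i _ do rewrite natrD.
  rewrite !big_split /= !sN.
  have : (#|N|%:R : R) < #|A|%:R by rewrite ltr_nat.
  lra.
have h1 : (dhat (sigma (fprime f p q U V)) <= (@objective R n p' q')%:E)%E.
  rewrite /dhat asboolT; last by exists p', q'.
  apply: ereal_inf_lbound; by exists p', q'.
have h2 : ((@objective R n p q)%:E <= dhat (sigma (daelift f)))%E.
  rewrite /dhat asboolT; last by exists p, q.
  apply: le_ereal_inf_tmp => _ [p0 [q0 [fe ->]]]; rewrite lee_fin; exact: opt.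
apply: (le_lt_trans h1); apply: (lt_le_trans _ h2); by rewrite lte_fin.
Qed.
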